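(* Let $d\ge2$ be an integer and $N_1,\dots,N_d$ positive integers. Suppose $\mathbf{b}=(b_1,\dots,b_d)\in\mathbb{Z}^d$ is a nonzero vector with $\gcd(b_1,\dots,b_d)=1$ and $|b_i|\le N_i$ for all $1\le i\le d$. Then there exists a map $f_{\mathbf{b}}:\mathbb{Z}^d\to\mathbb{Z}^{d-1}$ of the form $f_{\mathbf{b}}(\mathbf{x})=M\mathbf{x}+\mathbf{v}$ with $M\in\mathbb{Z}^{(d-1)\times d}$ and $\mathbf{v}\in\mathbb{Z}^{d-1}$ such that: (1) for any $\mathbf{x}_1,\mathbf{x}_2\in\mathbb{Z}^d$, $f_{\mathbf{b}}(\mathbf{x}_1)=f_{\mathbf{b}}(\mathbf{x}_2)$ if and only if $\mathbf{x}_1-\mathbf{x}_2=k\mathbf{b}$ for some $k\in\mathbb{Z}$; (2) there exist positive integers $N_1^*,\dots,N_{d-1}^*\ge\min_{1\le i\le d}N_i$ with \[ \frac12N_1\cdots N_d\cdot\Big(\max_{1\le i\le d}\frac{|b_i|}{N_i}\Big)\le N_1^*\cdots N_{d-1}^*\le2^{d^2}N_1\cdots N_d\cdot\Big(\max_{1\le i\le d}\frac{|b_i|}{N_i}\Big) \] and $f_{\mathbf{b}}([N_1]\times\cdots\times[N_d])\subseteq[N_1^*]\times\cdots\times[N_{d-1}^*]$.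
   Context: $[N]=\{1,\dots,N\}$. *)

(* Defs.v *)
From HB Require Import structures.
From mathcomp Require Import all_boot all_order all_algebra.
Set Implicit Arguments. Unset Strict Implicit. Unset Printing Implicit Defensive.
Import Order.TTheory GRing.Theory Num.Theory.
Local Open Scope ring_scope.

Definition gcd_vec (d : nat) (b : 'cV[int]_d) : int :=
  foldr gcdz 0 [seq b i 0 | i <- enum 'I_d].

Definition in_box (n : nat) (N : 'I_n -> nat) (x : 'cV[int]_n) : Prop :=
  forall i, 1 <= x i 0 <= (N i)%:Z.

(* Main.v *)
Require Import Defs.
From HB Require Import structures.
From mathcomp Require Import all_boot all_order all_algebra.
From mathcomp Require Import zify ring lra.
From Stdlib Require Import Classical.
Set Warnings "-notation-overridden,-ambiguous-paths".
Set Implicit Arguments. Unset Strict Implicit. Unset Printing Implicit Defensive.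
Import Order.TTheory GRing.Theory Num.Theory.
Local Open Scope ring_scope.


Lemma unit_sq (u : int) : u \is a GRing.unit -> u * u = 1.
Proof. move=> /mulrV uv; set v := u^-1 in uv. nia. Qed.

Lemma ex_min_nat (P : nat -> Prop) :
  (exists k, P k) -> exists k, P k /\ forall j, P j -> (k <= j)%N.
Proof.
move=> [k Pk]; elim: k {-2}k (leqnn k) Pk => [|k IH] m.
  rewrite leqn0 => /eqP-> P0; exists 0%N; split=> // j _.
move=> lemk Pm; case: (classic (exists j, P j /\ (j < m)%N)) => [[j [Pj ltjm]]|nex].
  by apply: (IH j) => //; rewrite -ltnS; exact: leq_trans ltjm lemk.
exists m; split=> // j Pj; rewrite leqNgt; apply/negP=> ltjm; apply: nex; exists j; done.
Qed.

Definition wdiag d (w : 'I_d -> int) : 'M[int]_d := diag_mx (\row_i w i).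
Definition Gm d (w : 'I_d -> int) n (B : 'M[int]_(n, d)) : 'M[int]_n :=
  B *m wdiag w *m B^T.

Lemma GmE d (w : 'I_d -> int) n (B : 'M[int]_(n, d)) i j :
  Gm w B i j = \sum_k w k * B i k * B j k.
Proof.
rewrite /Gm /wdiag mxE; apply: eq_bigr => k _.
rewrite mul_mx_diag !mxE; ring.
Qed.

Lemma Gm_mul d (w : 'I_d -> int) n m (T : 'M[int]_(m, n)) (B : 'M[int]_(n, d)) :
  Gm w (T *m B) = T *m Gm w B *m T^T.
Proof. by rewrite /Gm trmx_mul !mulmxA. Qed.

Lemma Gm_tr d (w : 'I_d -> int) n (B : 'M[int]_(n, d)) : (Gm w B)^T = Gm w B.
Proof. by rewrite /Gm !trmx_mul trmxK /wdiag tr_diag_mx mulmxA. Qed.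

Lemma Gm_ge0 d (w : 'I_d -> int) n (B : 'M[int]_(n, d)) i :
  (forall k, 0 < w k) -> 0 <= Gm w B i i.
Proof.
move=> wp; rewrite GmE; apply: sumr_ge0 => k _.
rewrite -mulrA; apply: mulr_ge0; [exact: ltW | exact: sqr_ge0 ].
Qed.

Lemma Gm_eq0 d (w : 'I_d -> int) n (B : 'M[int]_(n, d)) i :
  (forall k, 0 < w k) -> Gm w B i i = 0 -> row i B = 0.
Proof.
move=> wp; rewrite GmE => /eqP; rewrite psumr_eq0; last first.
  by move=> k _; rewrite -mulrA; apply: mulr_ge0; [exact: ltW | exact: sqr_ge0 ].
move=> /allP H; apply/rowP => k; rewrite !mxE.
have := H k (mem_index_enum k); rewrite /= -mulrA mulf_eq0 (negbTE (lt0r_neq0 (wp k))) /=.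
by rewrite mulf_eq0 orbb => /eqP.
Qed.

Lemma det_row0 n (A : 'M[int]_n) i : row i A = 0 -> \det A = 0.
Proof.
move=> H; rewrite (expand_det_row _ i) big1 // => j _.
by have := congr1 (fun M : 'M[int]_(1,n) => M 0 j) H; rewrite !mxE => ->; rewrite mul0r.
Qed.

Lemma det_Gm_row0 d (w : 'I_d -> int) n (B : 'M[int]_(n, d)) i :
  row i B = 0 -> \det (Gm w B) = 0.
Proof. by move=> H; apply: (det_row0 (i := i)); rewrite /Gm !row_mul H !mul0mx. Qed.

Lemma det_Gm_mul d (w : 'I_d -> int) n (T : 'M[int]_n) (B : 'M[int]_(n, d)) :
  \det (Gm w (T *m B)) = \det T * \det T * \det (Gm w B).
Proof. by rewrite Gm_mul !det_mulmx det_tr; ring. Qed.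

Lemma smith_row n (x : 'rV[int]_n.+1) :
  exists (R : 'M[int]_n.+1) (c : int), R \in unitmx /\ forall j, x 0 j = c * R 0 j.
Proof.
case: (int_Smith_normal_form x) => L uL [R uR [s _ E]].
exists R, (L 0 0 * s`_0); split=> // j.
rewrite E mxE big_ord_recl big1 ?addr0.
  rewrite !mxE big_ord1 !mxE /= mulr1n.
  by [].  
move=> k _; rewrite !mxE big_ord1 !mxE /=.
by rewrite mulr0n mulr0 mul0r.
Qed.

Definition rnd (a V : int) : int :=
  if 2 * (a %% V)%Z <= V then (a %/ V)%Z else (a %/ V)%Z + 1.

Lemma rndP (a V : int) : 0 < V -> 4 * ((a - rnd a V * V) * (a - rnd a V * V)) <= V * V.
Proof.
move=> V0; have := divz_eq a V; have := modz_ge0 a (lt0r_neq0 V0).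
have := ltz_pmod a V0; rewrite /rnd.
set q := (a %/ V)%Z; set r := (a %% V)%Z => h1 h2 h3.
case: ifP => h4; nia.
Qed.

Lemma Gm_col_mx d (w : 'I_d -> int) m n (A : 'M[int]_(m, d)) (C : 'M[int]_(n, d)) :
  Gm w (col_mx A C) = block_mx (Gm w A) (A *m wdiag w *m C^T) (C *m wdiag w *m A^T) (Gm w C).
Proof. by rewrite /Gm mul_col_mx tr_col_mx mul_col_row. Qed.

Lemma Gm_row d (w : 'I_d -> int) n (A : 'M[int]_(n, d)) i :
  Gm w (row i A) 0 0 = Gm w A i i.
Proof. by rewrite !GmE; apply: eq_bigr => k _; rewrite !mxE. Qed.

Lemma quad_exp d (w : 'I_d -> int) (y v : 'I_d -> int) (al be : int) :
  \sum_k w k * (al * y k - be * v k) * (al * y k - be * v k) =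
  al * al * (\sum_k w k * y k * y k) - 2 * al * be * (\sum_k w k * y k * v k)
  + be * be * (\sum_k w k * v k * v k).
Proof.
rewrite !mulr_sumr -sumrB -big_split /=; apply: eq_bigr => k _; ring.
Qed.

Lemma ineq_key (V G X Sy q a : int) : G = Sy - 2*q*a + q*q*V -> X = V*V*Sy - 2*V*a*a + a*a*V ->
 4*((a - q*V)*(a-q*V)) <= V*V -> 0<V -> V<=G -> V*V*G <= 2*X.
Proof. move=> h1 h2 h3 h4 h5.
have e1: V*V*G = X + V*((a-q*V)*(a-q*V)) by rewrite h1 h2; ring.
have e2: 4*(V*((a-q*V)*(a-q*V))) <= V*(V*V) by nia.
have e3: V*(V*V) <= V*V*G by nia.
have e4: 0 < V*(V*V) by nia.
lra. Qed.
Lemma comb (e V S PX D' D c1 c2 : int) : 0 < e -> 0 < V -> 0 < D -> 0 <= S -> 0 <= c1 -> 0 <= c2 -> 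
  e*e*S <= c2*PX -> PX <= c1*D' -> V*D' = e*e*D -> V*S <= c2*c1*D.
Proof. move=> e0 V0 D0 S0 c10 c20 h1 h2 h3.
have h4 := ler_wpM2r (ltW V0) h1.
have h5 := ler_wpM2l c20 h2.
have h6 := ler_wpM2r (ltW V0) h5.
have h7 : e*e*(V*S) <= e*e*(c2*c1*D).
  have -> : e*e*(c2*c1*D) = c2*(c1*D')*V.
    have -> : c2*(c1*D')*V = c2*c1*(V*D') by ring.
    by rewrite h3; ring.
  have -> : e*e*(V*S) = e*e*S*V by ring.
  exact: le_trans h4 h6.
by move: h7; rewrite ler_pM2l // mulr_gt0.
Qed.

Lemma GmE2 d (w : 'I_d -> int) m n (A : 'M[int]_(m, d)) (C : 'M[int]_(n, d)) i j :
  (A *m wdiag w *m C^T) i j = \sum_k w k * A i k * C j k.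
Proof.
rewrite /wdiag mxE; apply: eq_bigr => k _.
rewrite mul_mx_diag !mxE; ring.
Qed.

Lemma det_unit_sq n (R : 'M[int]_n) : R \in unitmx -> \det R * \det R = 1.
Proof. by rewrite unitmxE => /unit_sq. Qed.

Lemma hermite d (w : 'I_d -> int) : (forall k, 0 < w k) ->
  forall n (B : 'M[int]_(n, d)), 0 < \det (Gm w B) ->
  exists T : 'M[int]_n, \det T != 0 /\
    \prod_(i < n) Gm w (T *m B) i i <= 2 ^+ (n * n) * \det (Gm w B).
Proof.
move=> wp; elim=> [|n IH] B detB.
  exists 1%:M; split; first by rewrite det1 oner_neq0.
  by rewrite big_ord0 expr0 mul1r det_mx00.
have Bn0 : exists z : 'rV[int]_n.+1, z *m B != 0.
  case: (classic (exists i, row i B != 0)) => [[i Hi]|H].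
    by exists 'e_i; rewrite -rowE.
  have B0 : B = 0.
    apply/matrixP => i j; rewrite mxE.
    have : row i B = 0 by apply/eqP; apply: NNPP => H'; apply: H; exists i; apply/negP.
    by move/(congr1 (fun M : 'M[int]_(1,d) => M 0 j)); rewrite !mxE.
  by move: detB; rewrite B0 /Gm !mul0mx det0 ltxx.
have [k [[x [xB xk]] kmin]] := ex_min_nat (P := fun k => exists z : 'rV[int]_n.+1,
   z *m B != 0 /\ absz (Gm w (z *m B) 0 0) = k)
   (let: ex_intro z hz := Bn0 in ex_intro _ _ (ex_intro _ z (conj hz erefl))).
have xmin : forall z : 'rV[int]_n.+1, z *m B != 0 -> Gm w (x *m B) 0 0 <= Gm w (z *m B) 0 0.
  move=> z zB; have := kmin _ (ex_intro _ z (conj zB erefl)); rewrite -xk.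
  have := Gm_ge0 (z *m B) 0 wp; have := Gm_ge0 (x *m B) 0 wp; lia.
have [R [c [uR xc]]] := smith_row x.
set r := row 0 R.
have xcr : x *m B = c *: (r *m B).
  by rewrite scalemxAl; congr (_ *m B); apply/rowP => j; rewrite !mxE xc.
have rB : r *m B != 0 by apply: contraNneq xB; rewrite xcr => ->; rewrite scaler0.
have c0 : c != 0 by apply: contraNneq xB; rewrite xcr => ->; rewrite scale0r.
have Gsc : Gm w (x *m B) 0 0 = c * c * Gm w (r *m B) 0 0.
  rewrite xcr !GmE mulr_sumr; apply: eq_bigr => j _; rewrite !mxE; ring.
have rmin : forall z : 'rV[int]_n.+1, z *m B != 0 -> Gm w (r *m B) 0 0 <= Gm w (z *m B) 0 0.
  move=> z zB; apply: le_trans (xmin z zB); rewrite Gsc.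
  have cc : 1 <= c * c by lia.
  have := Gm_ge0 (r *m B) 0 wp; nia.

pose B' : 'M[int]_(1 + n, d) := R *m B.
pose v : 'M[int]_(1, d) := usubmx B'.
pose Y : 'M[int]_(n, d) := dsubmx B'.
have vr : v = r *m B.
  rewrite /v /B' -mul_usub_mx; congr (_ *m B); apply/rowP => j; rewrite !mxE.
  by congr (R _ j); apply: val_inj.
have B'E : col_mx v Y = B' by rewrite vsubmxK.
have detB' : \det (Gm w B') = \det (Gm w B) by rewrite det_Gm_mul det_unit_sq // mul1r.
pose V := Gm w v 0 0.
have V0 : 0 < V.
  rewrite lt0r Gm_ge0 // andbT; apply/eqP => /(Gm_eq0 wp) H0.
  move: rB; rewrite -vr; apply/negP; rewrite negbK; apply/eqP/rowP => j.
  by have := congr1 (fun M : 'M[int]_(1,d) => M 0 j) H0; rewrite !mxE.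
pose a : 'cV[int]_n := Y *m wdiag w *m v^T.
pose P' : 'M[int]_(n, d) := V *: Y - a *m v.
pose L : 'M[int]_(1 + n) := block_mx (1%:M : 'M_1) 0 (-a) (V%:M : 'M_n).
have LB : L *m B' = col_mx v P'.
  by rewrite -B'E mul_block_col mul1mx mul0mx addr0 mul_scalar_mx addrC mulNmx.
have GvV : Gm w v = V%:M by apply: mx11_scalar.
have PWv : P' *m wdiag w *m v^T = 0.
  rewrite /P' mulmxBl mulmxBl.
  have -> : a *m v *m wdiag w *m v^T = a *m Gm w v by rewrite /Gm !mulmxA.
  by rewrite GvV mul_mx_scalar -!scalemxAl -/a subrr.
have vWP : v *m wdiag w *m P'^T = 0.
  have -> : v *m wdiag w *m P'^T = (P' *m wdiag w *m v^T)^T.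
    by rewrite !trmx_mul trmxK /wdiag tr_diag_mx mulmxA.
  by rewrite PWv trmx0.
have detP' : V * \det (Gm w P') = V ^+ n * V ^+ n * \det (Gm w B).
  have := det_Gm_mul w L B'; rewrite LB Gm_col_mx vWP PWv det_lblock GvV.
  rewrite det_mx11 mxE eqxx mulr1n => ->.
  by rewrite /L det_lblock det1 mul1r det_scalar detB'.
have detP'0 : 0 < \det (Gm w P').
  have e0 : 0 < V ^+ n by exact: exprn_gt0.
  move: detP'; set D' := \det (Gm w P'); set D := \det (Gm w B); set e := V ^+ n.
  move=> h; rewrite -(pmulr_rgt0 _ V0) h; apply: mulr_gt0 => //; exact: mulr_gt0.
have [W0 [dW0 HW0]] := IH P' detP'0.

pose Y2 : 'M[int]_(n, d) := W0 *m Y.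
pose a2 : 'cV[int]_n := W0 *m a.
have a2E : a2 = Y2 *m wdiag w *m v^T by rewrite /a2 /a /Y2 !mulmxA.
have WP : W0 *m P' = V *: Y2 - a2 *m v.
  by rewrite /P' mulmxBr -scalemxAr mulmxA.
pose q : 'cV[int]_n := \col_i rnd (a2 i 0) V.
pose U2 : 'M[int]_(n, d) := Y2 - q *m v.
pose F : 'M[int]_(1 + n) := block_mx (1%:M : 'M_1) 0 (-q) W0.
pose T : 'M[int]_(1 + n) := F *m R.
have TB : T *m B = col_mx v U2.
  rewrite /T -mulmxA -/B' -B'E mul_block_col mul1mx mul0mx addr0 mulNmx.
  by rewrite /U2 addrC.
have qE : forall i, q i 0 = rnd (a2 i 0) V by move=> i; rewrite mxE.
clearbody Y2 a2 q v.
have dT : \det T != 0.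
  rewrite /T det_mulmx /F det_lblock det1 mul1r mulf_neq0 //.
  by apply/eqP => H0; have := det_unit_sq uR; rewrite H0 mul0r => /eqP; rewrite eq_sym oner_eq0.
have dGTB : \det (Gm w (T *m B)) != 0.
  rewrite det_Gm_mul !mulf_neq0 //; exact: lt0r_neq0.
exists T; split => //.
have key : forall i, V * V * Gm w U2 i i <= 2 * Gm w (W0 *m P') i i.
  move=> i.
  have U2row : row i U2 = row (rshift 1 i) T *m B by rewrite -row_mul TB rowKd.
  have U2n0 : row (rshift 1 i) T *m B != 0.
    rewrite -U2row; apply/eqP => H0; move/eqP: dGTB; apply.
    by apply: (@det_Gm_row0 _ _ _ _ (rshift 1 i)); rewrite TB rowKd.
  have VG : V <= Gm w U2 i i by rewrite -Gm_row U2row /V vr; apply: rmin.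
  have a2i : a2 i 0 = \sum_k w k * Y2 i k * v 0 k by rewrite a2E GmE2.
  have VE : V = \sum_k w k * v 0 k * v 0 k by rewrite /V GmE.
  apply: (ineq_key (Sy := \sum_k w k * Y2 i k * Y2 i k) (q := q i 0) (a := a2 i 0)) => //.
  - rewrite GmE.
    have -> : \sum_k w k * U2 i k * U2 i k =
       \sum_k w k * (1 * Y2 i k - q i 0 * v 0 k) * (1 * Y2 i k - q i 0 * v 0 k).
      apply: eq_bigr => k0 _; rewrite !mxE big_ord1 mul1r; done.
    rewrite quad_exp -a2i -VE; ring.
  - rewrite WP GmE.
    have -> : \sum_k w k * (V *: Y2 - a2 *m v) i k * (V *: Y2 - a2 *m v) i k =
       \sum_k w k * (V * Y2 i k - a2 i 0 * v 0 k) * (V * Y2 i k - a2 i 0 * v 0 k).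
      apply: eq_bigr => k0 _; rewrite !mxE big_ord1; done.
    rewrite quad_exp -a2i -VE; ring.
  - rewrite qE; exact: rndP.

rewrite TB.
change (\prod_(i < 1 + n) Gm w (col_mx v U2) i i <= 2 ^+ (n.+1 * n.+1) * \det (Gm w B)).
rewrite big_split_ord big_ord1 /= Gm_col_mx block_mxEul.
under eq_bigr do rewrite block_mxEdr.
rewrite -/V.
have P1 : \prod_(i < n) (V * V * Gm w U2 i i) <= \prod_(i < n) (2 * Gm w (W0 *m P') i i).
  apply: ler_prod => i _; rewrite key andbT; apply: mulr_ge0; last exact: Gm_ge0.
  exact: mulr_ge0 (ltW V0) (ltW V0).
rewrite !big_split /= !prodr_const !card_ord in P1.
have S0 : 0 <= \prod_(i < n) Gm w U2 i i by apply: prodr_ge0 => i _; exact: Gm_ge0.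
have c1 : 0 <= 2 ^+ (n * n) :> int by exact: exprn_ge0.
have c2 : 0 <= 2 ^+ n :> int by exact: exprn_ge0.
have := comb (exprn_gt0 n V0) V0 detB S0 c1 c2 P1 HW0 detP'.
move=> h; apply: le_trans h _; rewrite -exprD; apply: ler_wpM2r; first exact: ltW.
rewrite ler_eXn2l //; lia.
Qed.



Lemma detM0 n (w : 'I_n.+1 -> int) (b : 'cV[int]_n.+1) (R : 'M[int]_n.+1) (c : int) :
  (forall k, 0 < w k) -> R \in unitmx -> c * c = 1 -> (forall j, b j 0 = c * R 0 j) ->
  0 < \sum_k b k 0 * b k 0 * \prod_(l | l != k) w l ->
  \det (Gm w (row' 0 (invmx R)^T)) = \sum_k b k 0 * b k 0 * \prod_(l | l != k) w l.
Proof.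
move=> wp uR cc bR s0.
set s := \sum_k _.
set Q := invmx R.
have RQ : R *m Q = 1%:M by rewrite /Q mulmxV.
pose pi := \prod_l w l.
pose u k := b k 0 * \prod_(l | l != k) w l.
have wu : forall k, w k * u k = b k 0 * pi.
  by move=> k; rewrite /u /pi [in RHS](bigD1 k) //=; ring.
pose Z : 'M[int]_n.+1 := \matrix_(i, j) if i == 0 then u j else Q^T i j.
have ZM0 : row' 0 Z = row' 0 Q^T.
  by apply/matrixP => i j; rewrite !mxE eq_sym (negbTE (neq_lift 0 i)).
have bQ : forall j, \sum_k b k 0 * Q k j = c * (1%:M : 'M[int]_n.+1) 0 j.
  move=> j; rewrite -RQ mxE mulr_sumr; apply: eq_bigr => k _; rewrite bR; ring.
pose G := Gm w Z.
have G00 : G 0 0 = pi * s.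
  rewrite /G GmE /s mulr_sumr; apply: eq_bigr => k _.
  rewrite !mxE eqxx wu /u; ring.
have G0l : forall j, G 0 (lift 0 j) = 0.
  move=> j; rewrite /G GmE.
  have -> : \sum_k w k * Z 0 k * Z (lift 0 j) k = pi * \sum_k b k 0 * Q k (lift 0 j).
    rewrite mulr_sumr; apply: eq_bigr => k _.
    rewrite !mxE eqxx eq_sym (negbTE (neq_lift 0 j)) wu; ring.
  by rewrite bQ !mxE (negbTE (neq_lift 0 j)) mulr0 mulr0.
have detG1 : \det G = G 0 0 * \det (Gm w (row' 0 Z)).
  rewrite (expand_det_row _ 0) big_ord_recl big1 ?addr0; last first.
    by move=> j _; rewrite G0l mul0r.
  congr (_ * _); rewrite /cofactor expr0 mul1r; congr (\det _).
  apply/matrixP => i j; rewrite [RHS]GmE !mxE; apply: eq_bigr => k _; rewrite mul_mx_diag !mxE; ring.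
have detG2 : \det G = \det Z * \det Z * pi.
  by rewrite /G /Gm !det_mulmx det_tr /wdiag det_diag /pi; under eq_bigr do rewrite mxE; ring.
pose Y := Z *m R^T.
have detY1 : \det Y = \det Z * \det R by rewrite /Y det_mulmx det_tr.
have Yl : forall i j, Y (lift 0 i) j = (1%:M : 'M[int]_n.+1) (lift 0 i) j.
  move=> i j; have := congr1 (fun M : 'M[int]_n.+1 => M j (lift 0 i)) RQ.
  rewrite !mxE eq_sym => <-; apply: eq_bigr => k _.
  by rewrite !mxE eq_sym (negbTE (neq_lift 0 i)) mulrC.
have Y00 : Y 0 0 = c * s.
  rewrite !mxE /s mulr_sumr; apply: eq_bigr => k _; rewrite !mxE eqxx /u.
  have -> : R 0 k = c * b k 0 by rewrite bR mulrA cc mul1r.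
  ring.
clearbody Y.
have detY2 : \det Y = c * s.
  rewrite (expand_det_col _ 0) big_ord_recl big1 ?addr0; last first.
    by move=> i _; rewrite Yl mxE eq_sym (negbTE (neq_lift 0 i)) mul0r.
  rewrite Y00 /cofactor expr0 mul1r.
  have -> : row' 0 (col' 0 Y) = 1%:M.
    by apply/matrixP => i j; rewrite !mxE Yl !mxE (inj_eq (@lift_inj _ 0)).
  by rewrite det1 mulr1.
have dR := det_unit_sq uR.
have dZ : \det Z * \det Z = s * s.
  have : (\det Z * \det R) * (\det Z * \det R) = (c * s) * (c * s) by rewrite -detY1 detY2.
  have -> : (\det Z * \det R) * (\det Z * \det R) = \det Z * \det Z * (\det R * \det R) by ring.
  rewrite dR mulr1 => ->; have -> : c * s * (c * s) = (c * c) * (s * s) by ring.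
  by rewrite cc mul1r.
have pi0 : 0 < pi by apply: prodr_gt0 => l _; exact: wp.
rewrite -ZM0.
have : pi * s * \det (Gm w (row' 0 Z)) = pi * s * s.
  by have := detG1; rewrite detG2 dZ G00 => h; rewrite -h; ring.
move=> h; apply: (mulfI (mulf_neq0 (lt0r_neq0 pi0) (lt0r_neq0 s0))); exact: h.
Qed.

Lemma kerM0 n (b : 'cV[int]_n.+1) (R : 'M[int]_n.+1) (c : int) :
  R \in unitmx -> c * c = 1 -> (forall j, b j 0 = c * R 0 j) ->
  forall y : 'cV[int]_n.+1, row' 0 (invmx R)^T *m y = 0 <-> exists k, y = k *: b.
Proof.
move=> uR cc bR y; set Q := invmx R.
have RQ : R *m Q = 1%:M by rewrite /Q mulmxV.
have QR : Q *m R = 1%:M by rewrite /Q mulVmx.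
have Rb : forall j, R 0 j = c * b j 0 by move=> j; rewrite bR mulrA cc mul1r.
split.
  move=> H; exists (c * (Q^T *m y) 0 0).
  have yE : y = R^T *m (Q^T *m y) by rewrite mulmxA -trmx_mul QR trmx1 mul1mx.
  apply/matrixP => i j; rewrite (ord1 j) {1}yE !mxE big_ord_recl big1 ?addr0.
    by rewrite !mxE Rb; ring.
  move=> k _; have := congr1 (fun M : 'cV[int]_n => M k 0) H.
  rewrite !mxE => h; have -> : \sum_j0 Q^T (lift ord0 k) j0 * y j0 0 = \sum_j0 row' 0 Q^T k j0 * y j0 0.
    by apply: eq_bigr => l _; rewrite !mxE.
  by rewrite h mulr0.
move=> [k ->]; rewrite -scalemxAr; apply/matrixP => i j; rewrite (ord1 j) !mxE.
have -> : \sum_j0 row' 0 Q^T i j0 * b j0 0 = c * (R *m Q) 0 (lift 0 i).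
  by rewrite [(R *m Q) _ _]mxE mulr_sumr; apply: eq_bigr => l _; rewrite !mxE bR; ring.
by rewrite RQ mxE (negbTE (neq_lift 0 i)) mulr0 mulr0.
Qed.

Lemma det_cancel n m (T : 'M[int]_n) (X : 'M[int]_(n, m)) :
  \det T != 0 -> T *m X = 0 -> X = 0.
Proof.
move=> dT H; have : \adj T *m (T *m X) = 0 by rewrite H mulmx0.
rewrite mulmxA mul_adj_mx mul_scalar_mx => /matrixP H2.
apply/matrixP => i j; have := H2 i j; rewrite !mxE => /eqP.
by rewrite mulf_eq0 (negbTE dT) /= => /eqP.
Qed.

Lemma dvdz_foldr_gcd (c : int) (s : seq int) :
  all (fun x => (c %| x)%Z) s -> (c %| foldr gcdz 0 s)%Z.
Proof. by elim: s => [|x s IH] //= /andP [h1 h2]; rewrite dvdz_gcd h1 IH. Qed.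

Lemma term_bound (m x Nn : int) : 1 <= x <= Nn ->
  0 <= m * x - Num.min m (m * Nn) <= `|m| * (Nn - 1).
Proof.
move=> /andP [h1 h2].
have [m0|m0] := lerP 0 m.
  have -> : Num.min m (m * Nn) = m by apply/min_idPl; nia.
  rewrite ger0_norm //; apply/andP; split; nia.
have -> : Num.min m (m * Nn) = m * Nn by apply/min_idPr; nia.
rewrite ltr0_norm //; apply/andP; split; nia.
Qed.

Lemma cs_sum n (a : 'I_n -> int) :
  (\sum_i a i) * (\sum_i a i) <= n%:R * \sum_i a i * a i.
Proof.
elim: n a => [|n IH] a; first by rewrite !big_ord0 mul0r.
rewrite !big_ord_recr /=; have := IH (fun i => a (widen_ord (leqnSn n) i)).
set S := \sum_(i < n) _; set Q := \sum_(i < n) _; set x := a _ => h.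
have Q0 : 0 <= Q by apply: sumr_ge0 => i _; exact: sqr_ge0.
have n0 : 0 <= n%:R :> int by exact: ler0n.
rewrite -natr1.
have sq : 0 <= (S - n%:R * x) * (S - n%:R * x) by exact: sqr_ge0.
suff : 0 <= Q + n%:R * x * x - 2 * S * x by lra.
have [nz|np] := eqVneq (n%:R : int) 0.
  rewrite nz in h *; have -> : S = 0 by nia.
  lra.
have np' : 0 < n%:R :> int by rewrite lt0r np.
rewrite -(pmulr_rge0 _ np'); nia.
Qed.

Lemma exp_ineq d' : (d'.+2 ^ d'.+2 * 2 ^ (d'.+1 * d'.+1) <= 2 ^ (d'.+2 * d'.+2 - 1) * 2 ^ (d'.+2 * d'.+2 - 1))%N.
Proof.
have h1 : (d'.+2 <= 2 ^ d'.+1)%N by apply: ltn_expl.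
have h2 : (d'.+2 ^ d'.+2 <= 2 ^ (d'.+1 * d'.+2))%N.
  by rewrite expnM leq_exp2r.
rewrite -expnD; apply: leq_trans (leq_mul h2 (leqnn _)) _.
rewrite -expnD leq_pexp2l //; nia.
Qed.

Lemma sq_le (x y : rat) : 0 <= y -> x * x <= y * y -> x <= y.
Proof. move=> y0 h; case: (lerP x y) => // h'; nra. Qed.

Lemma ar1 (a S Nn : int) : 0 < a -> 0 <= S -> 0 <= Nn - 1 -> Nn <= 1 + (a * (Nn - 1) + S).
Proof. nia. Qed.
Lemma ar2 (a S : int) : 0 < a -> 0 <= S -> 1 <= a + S.
Proof. lia. Qed.
Lemma ar3 (A B : int) : 1 <= B -> 1 + (A - B) <= A.
Proof. lia. Qed.
Lemma ar4 (n : nat) : (0 < n)%N -> 0 <= n%:Z - 1.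
Proof. lia. Qed.
Lemma ar5 (x y : int) : 1 <= x -> 1 <= y -> 1 <= x * y.
Proof. nia. Qed.
Lemma ar6 (z : int) : 0 <= z -> (1 <= absz (z + 1)%R)%N.
Proof. lia. Qed.
Lemma ar7 (z : int) : 1 <= z -> (0 < absz z)%N.
Proof. lia. Qed.
Lemma ar8 d' : (2 ^ (d'.+2 * d'.+2) = 2 * 2 ^ (d'.+2 * d'.+2 - 1))%N.
Proof. by rewrite -expnS; congr (2 ^ _)%N; rewrite mulSn addSn. Qed.
Lemma ar9 (X Pi C : rat) : 0 < X -> 1 <= C -> Pi <= C * X -> X / 2 + Pi <= 2 * C * X.
Proof. move=> *; nra. Qed.



Unset Implicit Arguments.

Theorem lemma4p5 (d : nat) (N : 'I_d -> nat) (b : 'cV[int]_d) :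
  (2 <= d)%N ->
  (forall i, (0 < N i)%N) ->
  b != 0 ->
  gcd_vec b = 1 ->
  (forall i, `|b i 0| <= (N i)%:Z) ->
  exists (M : 'M[int]_(d.-1, d)) (v : 'cV[int]_(d.-1)),
    (forall x1 x2 : 'cV[int]_d,
        M *m x1 + v = M *m x2 + v <-> exists k : int, x1 - x2 = k *: b) /\
    exists Ns : 'I_(d.-1) -> nat,
      (forall j, (0 < Ns j)%N) /\
      (forall j, exists i : 'I_d, (N i <= Ns j)%N) /\
      let mx : rat := \big[Num.max/0]_(i < d) ((`|b i 0|)%:~R / (N i)%:R) in
      (1 / 2) * (\prod_(i < d) ((N i)%:R : rat)) * mx <= \prod_(j < d.-1) ((Ns j)%:R : rat) /\
      \prod_(j < d.-1) ((Ns j)%:R : rat) <= (2 ^ (d * d))%:R * (\prod_(i < d) ((N i)%:R : rat)) * mx /\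
      (forall x : 'cV[int]_d, in_box N x -> in_box Ns (M *m x + v)).
Proof.
case: d N b => [|[|d']] N b //= hd Npos bn0 gb bN.
have [R [c [uR bR]]] := smith_row b^T.
have bR' : forall j, b j 0 = c * R 0 j by move=> j; rewrite -bR mxE.
have cdvd : (c %| gcd_vec b)%Z.
  rewrite /gcd_vec; apply: dvdz_foldr_gcd; apply/allP => x /mapP [i _ ->].
  by rewrite bR' dvdz_mulr.
have cc : c * c = 1 by move: cdvd; rewrite gb dvdz1; lia.
pose w (i : 'I_d'.+2) : int := (N i)%:Z * (N i)%:Z.
have wp : forall k, 0 < w k.
  by move=> k; have := Npos k; rewrite /w -ltz_nat => h; apply: mulr_gt0.
set s := \sum_k b k 0 * b k 0 * \prod_(l | l != k) w l.
have s0 : 0 < s.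
  have [k bk] : exists k, b k 0 != 0.
    apply: NNPP => H; move/eqP: bn0; apply; apply/matrixP => i j.
    rewrite (ord1 j) mxE; apply/eqP; apply: NNPP => H'; apply: H; exists i; exact/negP.
  rewrite /s (bigD1 k) //=; apply: ltr_pwDl.
    apply: mulr_gt0; first by rewrite lt0r mulf_neq0 //= sqr_ge0.
    by apply: prodr_gt0 => l _; exact: wp.
  apply: sumr_ge0 => l _; apply: mulr_ge0; first exact: sqr_ge0.
  by apply: prodr_ge0 => l' _; exact: ltW.
pose M0 := row' 0 (invmx R)^T.
have dM0 := detM0 wp uR cc bR' s0.
have hM0 : 0 < \det (Gm w M0) by rewrite dM0.
have [T [dT HT]] := hermite wp hM0.
pose M := T *m M0.
have kerM : forall y, M *m y = 0 <-> exists k, y = k *: b.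
  move=> y; rewrite -(kerM0 uR cc bR'); split => [h|h].
    by apply: (det_cancel dT); rewrite mulmxA.
  by rewrite /M -mulmxA h mulmx0.

have dGM : \det (Gm w M) != 0.
  by rewrite /M det_Gm_mul dM0 !mulf_neq0 // lt0r_neq0.
have HT' : \prod_(i < d'.+1) Gm w M i i <= 2 ^+ (d'.+1 * d'.+1) * s.
  by move: HT; rewrite dM0 => h; exact: h.
clearbody M.
have rowM : forall j, exists i, M j i != 0.
  move=> j; apply: NNPP => H; move/eqP: dGM; apply; apply: (@det_Gm_row0 _ _ _ _ j).
  apply/rowP => i; rewrite !mxE; apply/eqP; apply: NNPP => H'; apply: H; exists i; exact/negP.
have Nm1 : forall i, 0 <= (N i)%:Z - 1 by move=> i; exact: ar4.
pose rng (j : 'I_d'.+1) : int := 1 + \sum_i `|M j i| * ((N i)%:Z - 1).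
have rng1 : forall j, 1 <= rng j.
  move=> j; rewrite /rng lerDl; apply: sumr_ge0 => i _; exact: mulr_ge0.
have rngN : forall j, exists i, (N i)%:Z <= rng j.
  move=> j; have [i Hi] := rowM j; exists i; rewrite /rng (bigD1 i) //=.
  have : 0 < `|M j i| by rewrite normr_gt0.
  have : 0 <= \sum_(k | k != i) `|M j k| * ((N k)%:Z - 1).
    by apply: sumr_ge0 => k _; exact: mulr_ge0.
  move=> h1 h2; exact: ar1 h2 h1 (Nm1 i).
have nn : forall x : int, `|x| * `|x| = x * x.
  by move=> x; rewrite -normrM ger0_norm // sqr_ge0.
have rngsq : forall j, rng j * rng j <= (d'.+2)%:R * Gm w M j j.
  move=> j.
  have h1 : rng j <= \sum_i `|M j i| * (N i)%:Z.
    have [i Hi] := rowM j.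
    have h0 : 1 <= \sum_i `|M j i|.
      rewrite (bigD1 i) //=; have : 0 < `|M j i| by rewrite normr_gt0.
      have : 0 <= \sum_(k | k != i) `|M j k| by apply: sumr_ge0.
      move=> h1 h2; exact: ar2 h2 h1.
    rewrite /rng; under eq_bigr do rewrite mulrBr mulr1.
    by rewrite sumrB; exact: ar3.
  have h2 := cs_sum (fun i => `|M j i| * (N i)%:Z).
  have e : \sum_i `|M j i| * (N i)%:Z * (`|M j i| * (N i)%:Z) = Gm w M j j.
    rewrite GmE; apply: eq_bigr => i _; rewrite /w.
    have -> : `|M j i| * (N i)%:Z * (`|M j i| * (N i)%:Z) = (`|M j i| * `|M j i|) * ((N i)%:Z * (N i)%:Z) by ring.
    by rewrite nn; ring.
  rewrite e /= in h2.
  apply: le_trans h2; have := rng1 j => r1; apply: ler_pM => //; exact: le_trans ler01 r1.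
pose Pi := \prod_j rng j.
have Pi1 : 1 <= Pi.
  apply: (big_ind (fun x => 1 <= x)) => // x y hx hy; exact: ar5.
have PiSq : Pi * Pi <= (d'.+2)%:R ^+ d'.+1 * (2 ^+ (d'.+1 * d'.+1) * s).
  have h : \prod_j (rng j * rng j) <= \prod_j ((d'.+2)%:R * Gm w M j j).
    apply: ler_prod => j _; rewrite rngsq andbT; exact: sqr_ge0.
  rewrite big_split /= big_split /= prodr_const card_ord in h.
  apply: le_trans h _; apply: ler_wpM2l; first exact: exprn_ge0.
  exact: HT'.

have [k bk] : exists k, b k 0 != 0.
  apply: NNPP => H; move/eqP: bn0; apply; apply/matrixP => i j.
  rewrite (ord1 j) mxE; apply/eqP; apply: NNPP => H'; apply: H; exists i; exact/negP.
pose P : rat := \prod_(i < d'.+2) (N i)%:R.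
pose mxv : rat := \big[Num.max/0]_(i < d'.+2) ((`|b i 0|)%:~R / (N i)%:R).
have Npos' : forall i, 0 < (N i)%:R :> rat by move=> i; rewrite ltr0n Npos.
have P0 : 0 < P by apply: prodr_gt0 => i _; exact: Npos'.
have mx_ge : forall i, (`|b i 0|)%:~R / (N i)%:R <= mxv by move=> i; exact: le_bigmax.
have mx0 : 0 < mxv.
  apply: lt_le_trans (mx_ge k); apply: divr_gt0 => //.
  by rewrite ltr0z normr_gt0.
have sR : (s%:~R : rat) <= (d'.+2)%:R * ((P * mxv) * (P * mxv)).
  rewrite /s rmorph_sum /=.
  have -> : (d'.+2)%:R * ((P * mxv) * (P * mxv)) = \sum_(i < d'.+2) ((P * mxv) * (P * mxv)).
    by rewrite sumr_const card_ord mulr_natl.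
  apply: ler_sum => i _.
  have e1 : ((b i 0 * b i 0 * \prod_(l | l != i) w l)%:~R : rat) =
     ((`|b i 0|)%:~R / (N i)%:R * P) * ((`|b i 0|)%:~R / (N i)%:R * P).
    rewrite /P [in RHS](bigD1 i) //= rmorphM rmorph_prod /=.
    have -> : \prod_(l | l != i) ((w l)%:~R : rat) =
       (\prod_(l | l != i) (N l)%:R) * (\prod_(l | l != i) ((N l)%:R : rat)).
      rewrite -big_split /=; apply: eq_bigr => l _; rewrite /w rmorphM /=; done.
    have hN := lt0r_neq0 (Npos' i).
    rewrite rmorphM /=.
    have hb : ((`|b i 0|)%:~R : rat) * (`|b i 0|)%:~R = (b i 0)%:~R * (b i 0)%:~R.
      by rewrite -!rmorphM /= PoszM abszE nn.
    by rewrite -hb; field.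
  rewrite e1; have h0 : 0 <= (`|b i 0|)%:~R / (N i)%:R * P.
    by apply: mulr_ge0 (ltW P0); apply: divr_ge0; rewrite ?ler0z // ler0n.
  have h1 : (`|b i 0|)%:~R / (N i)%:R * P <= mxv * P by rewrite ler_pM2r //; exact: mx_ge.
  rewrite (mulrC P mxv); exact: ler_pM.

pose X := P * mxv.
have X0 : 0 < X by exact: mulr_gt0.
pose C : rat := (2 ^ (d'.+2 * d'.+2 - 1))%:R.
have C0 : 0 < C by rewrite ltr0n expn_gt0.
have KC : ((d'.+2)%:R ^+ d'.+1 * (2 ^+ (d'.+1 * d'.+1)) * (d'.+2)%:R : rat) <= C * C.
  have -> : ((d'.+2)%:R ^+ d'.+1 * (2 ^+ (d'.+1 * d'.+1)) * (d'.+2)%:R : rat) =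
     ((d'.+2 ^ d'.+1 * 2 ^ (d'.+1 * d'.+1) * d'.+2)%N)%:R by rewrite !natrM !natrX.
  rewrite /C -natrM ler_nat mulnAC -expnSr; exact: exp_ineq.
have PiX : (Pi%:~R : rat) <= C * X.
  apply: sq_le; first by apply: mulr_ge0; exact: ltW.
  have h1 : ((Pi * Pi)%:~R : rat) <= ((d'.+2)%:R ^+ d'.+1 * (2 ^+ (d'.+1 * d'.+1) * s))%:~R.
    by rewrite ler_int.
  rewrite !rmorphM rmorphXn /= rmorphXn /= in h1.
  apply: le_trans h1 _.
  have -> : C * X * (C * X) = (C * C) * (X * X) by ring.
  rewrite !rmorph_nat.
  set K1 : rat := (d'.+2)%:R ^+ d'.+1; set K2 : rat := 2 ^+ (d'.+1 * d'.+1).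
  have K10 : 0 <= K1 by exact: exprn_ge0.
  have K20 : 0 <= K2 by exact: exprn_ge0.
  apply: (@le_trans _ _ (K1 * K2 * ((d'.+2)%:R * (X * X)))).
    by rewrite mulrA; apply: ler_wpM2l; [exact: mulr_ge0 | exact: sR].
  rewrite mulrA; apply: ler_wpM2r; first by apply: mulr_ge0; exact: ltW.
  exact: KC.

have Pi0 : 0 < (Pi%:~R : rat) by rewrite ltr0z; exact: lt_le_trans ltr01 Pi1.
pose q : rat := X / (2 * Pi%:~R).
have q0 : 0 <= q.
  by apply: divr_ge0; [exact: ltW | apply: mulr_ge0 => //; exact: ltW].
have qE : q * Pi%:~R = X / 2 by rewrite /q; field; exact: lt0r_neq0.
have fl0 : 0 <= Num.floor q by rewrite floor_ge0.
pose t := absz (Num.floor q + 1).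
have tE : (t%:R : rat) = (Num.floor q + 1)%:~R.
  by rewrite /t natr_absz ger0_norm // addr_ge0.
have tgt : q < t%:R by rewrite tE; exact: floorD1_gt.
have tle : (t%:R : rat) <= q + 1 by rewrite tE intrD lerD2r floor_le.
have t1 : (1 <= t)%N by exact: ar6.
pose Ns (j : 'I_d'.+1) : nat := if j == ord0 then (t * absz (rng j))%N else absz (rng j).
have rngE : forall j, ((absz (rng j))%:R : rat) = (rng j)%:~R.
  by move=> j; rewrite natr_absz ger0_norm // (le_trans ler01 (rng1 j)).
have rngZ : forall j, (absz (rng j))%:Z = rng j.
  by move=> j; rewrite abszE ger0_norm // (le_trans ler01 (rng1 j)).
have NsZ : forall j, rng j <= (Ns j)%:Z.
  move=> j; rewrite /Ns; case: ifP => _; last by rewrite rngZ.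
  rewrite PoszM rngZ ler_peMl //; first exact: le_trans ler01 (rng1 j).
have prodNs : \prod_j ((Ns j)%:R : rat) = t%:R * Pi%:~R.
  have PiE : (Pi%:~R : rat) = \prod_j ((rng j)%:~R) by rewrite rmorph_prod.
  rewrite PiE !big_ord_recl /Ns eqxx natrM rngE -mulrA.
  congr (_ * (_ * _)); apply: eq_bigr => i _; rewrite eq_sym (negbTE (neq_lift _ _)).
  exact: rngE.

exists M, (\col_j (1 - \sum_i Num.min (M j i) (M j i * (N i)%:Z))).
split.
  move=> x1 x2; split.
    move/addIr => h; apply/kerM; by rewrite mulmxBr h subrr.
  move=> hk; have := proj2 (kerM (x1 - x2)) hk; rewrite mulmxBr => /eqP.
  by rewrite subr_eq0 => /eqP ->.
exists Ns; split; [|split; [|split; [|split]]].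
- move=> j; rewrite /Ns; case: ifP => _; last exact: ar7 (rng1 j).
  by rewrite muln_gt0 t1 /=; exact: ar7 (rng1 j).
- move=> j; have [i Hi] := rngN j; exists i; rewrite -lez_nat; exact: le_trans Hi (NsZ j).
- change (1 / 2 * P * mxv <= \prod_(j < d'.+1) (Ns j)%:R); rewrite prodNs.
  have -> : 1 / 2 * P * mxv = q * Pi%:~R by rewrite qE /X; field.
  by rewrite ler_pM2r //; exact: ltW tgt.
- change (\prod_(j < d'.+1) (Ns j)%:R <= (2 ^ (d'.+2 * d'.+2))%:R * P * mxv); rewrite prodNs.
  rewrite ar8 natrM -/C -mulrA -/X.
  apply: le_trans (ler_wpM2r (ltW Pi0) tle) _.
  rewrite mulrDl qE mul1r; apply: (ar9 X0) => //.
  by rewrite /C (ler_nat _ 1) expn_gt0.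
- move=> x hx j; rewrite !mxE.
  have hS : 0 <= \sum_i (M j i * x i 0 - Num.min (M j i) (M j i * (N i)%:Z)) <=
            \sum_i `|M j i| * ((N i)%:Z - 1).
    apply/andP; split.
      by apply: sumr_ge0 => i _; have /andP [] := term_bound (M j i) (hx i).
    by apply: ler_sum => i _; have /andP [] := term_bound (M j i) (hx i).
  have -> : \sum_i M j i * x i 0 + (1 - \sum_i Num.min (M j i) (M j i * (N i)%:Z)) =
     1 + \sum_i (M j i * x i 0 - Num.min (M j i) (M j i * (N i)%:Z)).
    by rewrite sumrB; ring.
  move: hS => /andP [h1 h2]; apply/andP; split; first by rewrite lerDl.
  apply: le_trans (NsZ j); rewrite /rng lerD2l; exact: h2.
Qed.
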